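(* Let $\psi:\mathbb{R}\times\mathbb{Z}\to\mathbb{C}$ solve the lattice nonlinear Schrödinger equation $$i\,\partial_t\psi(t,x)=-\Delta\psi(t,x)+|\psi(t,x)|^2\psi(t,x),\qquad x\in\mathbb{Z},$$ where $\Delta f(x)=f(x+1)+f(x-1)-2f(x)$, with initial data satisfying $|\psi(0,x)|\le A$ for all $x\in\mathbb{Z}$. Then there exists a constant $C$ such that for every $x_0\in\mathbb{Z}$ and every $t_0\ge 1$, $$|\psi(t_0,x_0)|\le C A\, t_0^{1/2},\qquad\text{and}\qquad \frac{1}{t_0}\sum_{x\in\mathbb{Z},\,|x-x_0|\le t_0}|\psi(t_0,x)|^2\le C A^2 .$$
   Context: $\Delta=-\partial^*\partial$ is the finite-difference Laplacian on $\mathbb{Z}$, with $\partial f(x)=f(x+1)-f(x)$ and $\partial^*f(x)=f(x-1)-f(x)$. The solution is understood as a global-in-time solution with values in $\ell^\infty(\mathbb{Z})$. *)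

(* Defs.v *)
From Stdlib Require Import Reals ZArith.
From Coquelicot Require Import Coquelicot.
Open Scope R_scope.

Definition lap (f : Z -> C) (x : Z) : C :=
  (f (x + 1)%Z + f (x - 1)%Z - RtoC 2 * f x)%C.

(* psi : R -> Z -> C is a global-in-time l^infty(Z)-valued solution of
     i d/dt psi(t,x) = - (Delta psi(t))(x) + |psi(t,x)|^2 psi(t,x):
   each coordinate is differentiable in t and satisfies the equation
   (written as d/dt psi = -i * RHS), and psi is bounded in l^infty(Z)
   locally uniformly in time. *)
Definition is_lattice_NLS_solution (psi : R -> Z -> C) : Prop :=
  (forall (t : R) (x : Z),
      is_derive (fun s : R => psi s x) t
        (Copp Ci * (Copp (lap (psi t) x)
                    + RtoC (Cmod (psi t x) ^ 2) * psi t x))%C)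
  /\ (forall T : R, exists M : R, forall (t : R) (x : Z),
        Rabs t <= T -> Cmod (psi t x) <= M).

(* Sum of |psi(t0,x)|^2 over integers x with |x - x0| <= t0 (t0 >= 0):
   these are exactly x = x0 - N + k, k = 0..2N, with N = floor t0. *)
Definition local_mass (psi : R -> Z -> C) (t0 : R) (x0 : Z) : R :=
  let N := Int_part t0 in
  sum_f_R0 (fun k : nat => Cmod (psi t0 (x0 - N + Z.of_nat k)%Z) ^ 2)
           (Z.to_nat (2 * N)).

(* Main.v *)
Require Import Defs.
From Stdlib Require Import Reals ZArith Lia Lra Psatz.
From Coquelicot Require Import Coquelicot.
Open Scope R_scope.

Lemma is_derive_fstC (f : R -> C) t (l : C) :
  is_derive f t l -> is_derive (fun s => fst (f s)) t (fst l).
Proof.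
  intros H. unfold is_derive in *.
  apply (filterdiff_comp f (fun z : C => fst z) _ (fun z : C => fst z) H).
  apply filterdiff_linear. apply is_linear_fst.
Qed.
Lemma is_derive_sndC (f : R -> C) t (l : C) :
  is_derive f t l -> is_derive (fun s => snd (f s)) t (snd l).
Proof.
  intros H. unfold is_derive in *.
  apply (filterdiff_comp f (fun z : C => snd z) _ (fun z : C => snd z) H).
  apply filterdiff_linear. apply is_linear_snd.
Qed.

Lemma is_derive_eq (f : R -> R) t l l' : is_derive f t l -> l = l' -> is_derive f t l'.
Proof. intros; subst; auto. Qed.

Definition nn (psi : R -> Z -> C) t x := fst (psi t x) ^ 2 + snd (psi t x) ^ 2.
Definition GG (psi : R -> Z -> C) t x :=
  snd (psi t x) * fst (psi t (x+1)%Z) - fst (psi t x) * snd (psi t (x+1)%Z).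

Lemma Cmod_sq z : Cmod z ^ 2 = fst z ^ 2 + snd z ^ 2.
Proof.
  unfold Cmod. rewrite pow2_sqrt; auto. nra.
Qed.

Lemma deriv_nn psi t x : is_lattice_NLS_solution psi ->
  is_derive (fun s => nn psi s x) t (2 * (GG psi t x - GG psi t (x - 1)%Z)).
Proof.
  intros [H _]. specialize (H t x).
  pose proof (is_derive_fstC _ _ _ H) as Hu.
  pose proof (is_derive_sndC _ _ _ H) as Hv.
  pose proof (is_derive_plus _ _ _ _ _ (is_derive_pow _ 2 _ _ Hu) (is_derive_pow _ 2 _ _ Hv)) as Hd.
  eapply is_derive_eq. exact Hd.
  unfold GG, lap. replace (x - 1 + 1)%Z with x by ring.
  destruct (psi t x) as [a b]. destruct (psi t (x+1)%Z) as [a1 b1].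
  destruct (psi t (x-1)%Z) as [a2 b2].
  unfold plus; simpl. unfold Cmult, Copp, Cplus, Cminus, Ci, RtoC; simpl. ring.
Qed.

Lemma deriv_sum (f : nat -> R -> R) (df : nat -> R) t n :
  (forall k, is_derive (f k) t (df k)) ->
  is_derive (fun s => sum_f_R0 (fun k => f k s) n) t (sum_f_R0 df n).
Proof.
  intros H. induction n as [|n IH]; simpl.
  - apply H.
  - apply (is_derive_plus _ _ _ _ _ IH (H (S n))).
Qed.

Lemma sbp (w gp gm : nat -> R) n : (forall k, gm (S k) = gp k) ->
  sum_f_R0 (fun k => w k * (2 * (gp k - gm k))) (S n) =
  2 * (sum_f_R0 (fun k => (w k - w (S k)) * gp k) n + w (S n) * gp (S n) - w 0%nat * gm 0%nat).
Proof.
  intros H. induction n as [|n IH].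
  - simpl. rewrite H. ring.
  - rewrite tech5, IH. rewrite (tech5 (fun k => (w k - w (S k)) * gp k)). rewrite H. ring.
Qed.

Lemma sum_pairs (b : nat -> R) n :
  sum_f_R0 (fun k => b k + b (S k)) n = 2 * sum_f_R0 b (S n) - b 0%nat - b (S n).
Proof.
  induction n as [|n IH]; simpl in *.
  - ring.
  - rewrite IH. ring.
Qed.

Lemma sum_nonneg (f : nat -> R) n : (forall k, 0 <= f k) -> 0 <= sum_f_R0 f n.
Proof.
  intros H; induction n; simpl; [apply H| specialize (H (S n)); lra].
Qed.

Lemma sum_le (f g : nat -> R) n : (forall k, f k <= g k) -> sum_f_R0 f n <= sum_f_R0 g n.
Proof.
  intros H; induction n; simpl; [apply H| specialize (H (S n)); lra].
Qed.

Lemma sum_term (f : nat -> R) n k : (forall j, 0 <= f j) -> (k <= n)%nat -> f k <= sum_f_R0 f n.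
Proof.
  intros H Hk. induction n.
  - replace k with 0%nat by lia. simpl; lra.
  - destruct (Nat.eq_dec k (S n)) as [->|Hne].
    + simpl. pose proof (sum_nonneg f n H). lra.
    + simpl. pose proof (H (S n)). assert (f k <= sum_f_R0 f n) by (apply IHn; lia). lra.
Qed.

Lemma sum_mono (f : nat -> R) n m : (forall j, 0 <= f j) -> (n <= m)%nat -> sum_f_R0 f n <= sum_f_R0 f m.
Proof.
  intros H Hnm. induction Hnm.
  - lra.
  - simpl. pose proof (H (S m)). lra.
Qed.

Lemma sum_shift (g : nat -> R) n d : (forall j, 0 <= g j) ->
  sum_f_R0 (fun k => g (k + d)%nat) n <= sum_f_R0 g (n + d).
Proof.
  revert g. induction d as [|d IH]; intros g Hg.
  - apply Req_le. rewrite Nat.add_0_r. apply sum_eq. intros; f_equal; lia.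
  - replace (sum_f_R0 (fun k => g (k + S d)%nat) n) with
      (sum_f_R0 (fun k => (fun j => g (S j)) (k + d)%nat) n)
      by (apply sum_eq; intros; f_equal; lia).
    eapply Rle_trans. apply (IH (fun j => g (S j))). intros; apply Hg.
    replace (n + S d)%nat with (S (n + d)) by lia.
    rewrite (decomp_sum g) by lia. simpl pred. pose proof (Hg 0%nat). lra.
Qed.

Definition wt q K k := q ^ ((K - k) + (k - K)).

Lemma wt_rel q K k : wt q K (S k) = q * wt q K k \/ wt q K k = q * wt q K (S k).
Proof.
  unfold wt. destruct (lt_dec k K).
  - right. replace ((K - k) + (k - K))%nat with (S ((K - S k) + (S k - K))) by lia. reflexivity.
  - left. replace ((K - S k) + (S k - K))%nat with (S ((K - k) + (k - K))) by lia. reflexivity.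
Qed.

Lemma wt_pos q K k : 0 < q -> 0 < wt q K k.
Proof. intros; unfold wt; apply pow_lt; auto. Qed.

Lemma wt_diff q c K k : 0 < q -> q < 1 -> c * q = 1 - q -> 0 <= c ->
  Rabs (wt q K k - wt q K (S k)) <= c * wt q K k /\
  Rabs (wt q K k - wt q K (S k)) <= c * wt q K (S k).
Proof.
  intros Hq0 Hq1 Hc Hc0.
  pose proof (wt_pos q K k Hq0). pose proof (wt_pos q K (S k) Hq0).
  destruct (wt_rel q K k) as [E|E]; rewrite E in *; split; apply Rabs_le; split; nra.
Qed.

Lemma wt_sum q K : sum_f_R0 (wt q K) (2 * K) + 1 = 2 * sum_f_R0 (fun i => q ^ i) K.
Proof.
  induction K as [|K IH].
  - unfold wt; simpl. ring.
  - replace (2 * S K)%nat with (S (S (2 * K))) by lia.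
    rewrite (decomp_sum (wt q (S K))) by lia. rewrite Nat.pred_succ.
    rewrite (tech5 (fun i => wt q (S K) (S i))).
    replace (sum_f_R0 (fun i => wt q (S K) (S i)) (2 * K)) with (sum_f_R0 (wt q K) (2 * K))
      by (apply sum_eq; intros; reflexivity).
    rewrite (tech5 (fun i => q ^ i)).
    unfold wt at 1 3.
    replace ((S K - 0) + (0 - S K))%nat with (S K) by lia.
    replace ((S K - S (S (2 * K))) + (S (S (2 * K)) - S K))%nat with (S K) by lia.
    lra.
Qed.

Lemma pow_anti q m e : 0 < q -> q <= 1 -> (e <= m)%nat -> q ^ m <= q ^ e.
Proof.
  intros H0 H1 H. induction H.
  - lra.
  - simpl. match goal with |- _ * q ^ ?m <= _ => pose proof (pow_lt q m H0) end. nra.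
Qed.

Lemma exp_pow_nat s n : exp s ^ n = exp (s * INR n).
Proof.
  induction n.
  - simpl. rewrite Rmult_0_r, exp_0. reflexivity.
  - rewrite S_INR. simpl. rewrite IHn, <- exp_plus. f_equal. ring.
Qed.

Definition xk x0 K k := (x0 - Z.of_nat K + Z.of_nat k)%Z.
Definition WW psi q K x0 t := sum_f_R0 (fun k => wt q K k * nn psi t (xk x0 K k)) (2*K).
Definition dWW psi q K x0 t :=
  sum_f_R0 (fun k => wt q K k * (2 * (GG psi t (xk x0 K k) - GG psi t (xk x0 K k - 1)%Z))) (2*K).

Lemma deriv_WW psi q K x0 t : is_lattice_NLS_solution psi ->
  is_derive (WW psi q K x0) t (dWW psi q K x0 t).
Proof.
  intros Hs. unfold WW, dWW.
  apply (deriv_sum (fun k s => wt q K k * nn psi s (xk x0 K k))).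
  intros k. apply is_derive_scal. apply deriv_nn; auto.
Qed.

Lemma nn_nonneg psi t x : 0 <= nn psi t x.
Proof. unfold nn. nra. Qed.

Lemma GG_bound psi t x : Rabs (GG psi t x) <= (nn psi t x + nn psi t (x+1)%Z) / 2.
Proof.
  unfold GG, nn. destruct (psi t x) as [a b]. destruct (psi t (x+1)%Z) as [a1 b1]. simpl.
  apply Rabs_le. pose proof (pow2_ge_0 (b - a1)). pose proof (pow2_ge_0 (b + a1)).
  pose proof (pow2_ge_0 (a - b1)). pose proof (pow2_ge_0 (a + b1)). split; nra.
Qed.

Lemma dWW_bound psi q c K x0 t B : 0 < q -> q < 1 -> c * q = 1 - q -> 0 <= c ->
  (1 <= K)%nat -> (forall x, nn psi t x <= B) ->
  dWW psi q K x0 t <= 2 * c * WW psi q K x0 t + 4 * q ^ K * B.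
Proof.
  intros Hq0 Hq1 Hc Hc0 HK HB.
  unfold dWW, WW.
  set (n := (2 * K - 1)%nat).
  replace (2 * K)%nat with (S n) by (unfold n; lia).
  rewrite (sbp (wt q K) (fun k => GG psi t (xk x0 K k)) (fun k => GG psi t (xk x0 K k - 1)%Z)).
  2:{ intros k. f_equal. unfold xk. rewrite Nat2Z.inj_succ. lia. }
  set (b := fun k => wt q K k * nn psi t (xk x0 K k)).
  assert (Hb : forall k, 0 <= b k).
  { intros k. unfold b. pose proof (wt_pos q K k Hq0). pose proof (nn_nonneg psi t (xk x0 K k)). nra. }
  assert (H1 : sum_f_R0 (fun k => (wt q K k - wt q K (S k)) * GG psi t (xk x0 K k)) n
               <= c / 2 * sum_f_R0 (fun k => b k + b (S k)) n).
  { rewrite scal_sum. apply sum_le. intros k.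
    destruct (wt_diff q c K k Hq0 Hq1 Hc Hc0) as [D1 D2].
    pose proof (GG_bound psi t (xk x0 K k)) as G.
    assert (E : (xk x0 K k + 1)%Z = xk x0 K (S k)) by (unfold xk; rewrite Nat2Z.inj_succ; lia).
    rewrite E in G. unfold b.
    pose proof (nn_nonneg psi t (xk x0 K k)). pose proof (nn_nonneg psi t (xk x0 K (S k))).
    set (d := wt q K k - wt q K (S k)) in *.
    set (g := GG psi t (xk x0 K k)) in *.
    eapply Rle_trans. apply Rle_abs. rewrite Rabs_mult.
    eapply Rle_trans. apply Rmult_le_compat_l. apply Rabs_pos. exact G.
    nra. }
  rewrite sum_pairs in H1.
  pose proof (Hb 0%nat). pose proof (Hb (S n)).
  assert (Hw0 : wt q K 0 = q ^ K) by (unfold wt; f_equal; lia).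
  assert (HwS : wt q K (S n) = q ^ K) by (unfold wt, n; f_equal; lia).
  pose proof (pow_lt q K Hq0) as HqK.
  assert (B1 : Rabs (GG psi t (xk x0 K (S n))) <= B).
  { eapply Rle_trans. apply GG_bound. pose proof (HB (xk x0 K (S n))). pose proof (HB (xk x0 K (S n) + 1)%Z). lra. }
  assert (B2 : Rabs (GG psi t (xk x0 K 0 - 1)%Z) <= B).
  { eapply Rle_trans. apply GG_bound. pose proof (HB (xk x0 K 0 - 1)%Z). pose proof (HB (xk x0 K 0 - 1 + 1)%Z). lra. }
  rewrite Hw0, HwS.
  apply Rabs_le_between in B1. apply Rabs_le_between in B2.
  fold b. nra.
Qed.

Lemma gronwall (W dW : R -> R) lam E T : 0 < lam -> 0 < T -> 0 <= E ->
  (forall t, is_derive W t (dW t)) ->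
  (forall t, Rabs t <= T -> dW t <= lam * W t + E) ->
  W T <= exp (lam * T) * (W 0 + E / lam).
Proof.
  intros Hl HT HE Hd Hb.
  set (F := fun t => exp (- lam * t) * (W t + E / lam)).
  set (dF := fun t => (- lam * exp (- lam * t)) * (W t + E / lam) + exp (- lam * t) * dW t).
  assert (HF : forall t, is_derive F t (dF t)).
  { intros t.
    assert (He : is_derive (fun s => exp (- lam * s)) t (- lam * exp (- lam * t))).
    { assert (Hl' : is_derive (fun s => - lam * s) t (- lam)).
      { eapply is_derive_eq. apply is_derive_scal. apply is_derive_id. unfold one; simpl; ring. }
      pose proof (is_derive_comp exp _ t _ _ (is_derive_exp _) Hl') as H.
      eapply is_derive_eq. exact H. unfold scal; simpl; unfold mult; simpl; ring. }
    assert (Hw : is_derive (fun s => W s + E / lam) t (dW t)).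
    { eapply is_derive_eq. apply (is_derive_plus W (fun _ => E / lam) t (dW t) zero).
      apply Hd. apply is_derive_const. unfold plus, zero; simpl. ring. }
    pose proof (is_derive_mult _ _ _ _ _ He Hw) as Hm.
    eapply is_derive_eq. apply Hm. intros; apply Rmult_comm.
    unfold dF, plus, mult; simpl. ring. }
  destruct (MVT_cor4 F dF 0 T (fun c _ => HF c) T) as [c [Hc1 Hc2]].
  { rewrite Rminus_0_r, Rabs_pos_eq; lra. }
  assert (HdF : dF c <= 0).
  { unfold dF. rewrite !Rminus_0_r in Hc2. rewrite (Rabs_pos_eq T) in Hc2 by lra.
    specialize (Hb c Hc2). pose proof (exp_pos (- lam * c)).
    assert (- lam * (W c + E / lam) + dW c <= 0).
    { replace (- lam * (W c + E / lam)) with (- lam * W c - E) by (field; lra). lra. }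
    nra. }
  assert (F T <= F 0) by nra.
  unfold F in H. rewrite Rmult_0_r, exp_0, Rmult_1_l in H.
  assert (Hx : exp (lam * T) * exp (- lam * T) = 1).
  { rewrite <- exp_plus. replace (lam * T + - lam * T) with 0 by ring. apply exp_0. }
  pose proof (exp_pos (lam * T)).
  assert (0 <= E / lam) by (apply Rdiv_le_0_compat; lra).
  apply Rmult_le_compat_l with (r := exp (lam * T)) in H; [|lra].
  rewrite <- Rmult_assoc, Hx, Rmult_1_l in H. lra.
Qed.

Lemma sum_le_bnd (f g : nat -> R) n : (forall k, (k <= n)%nat -> f k <= g k) -> sum_f_R0 f n <= sum_f_R0 g n.
Proof.
  intros H; induction n; simpl.
  - apply H; lia.
  - assert (sum_f_R0 f n <= sum_f_R0 g n) by (apply IHn; intros; apply H; lia).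
    specialize (H (S n) (le_n _)). lra.
Qed.

Definition Cm := 4 * exp 1 * exp (2 * exp 1).

Lemma Cm_pos : 0 < Cm.
Proof. unfold Cm. pose proof (exp_pos 1). pose proof (exp_pos (2 * exp 1)). nra. Qed.

Lemma main_bound psi A x0 t0 : is_lattice_NLS_solution psi ->
  (forall x, Cmod (psi 0 x) <= A) -> 1 <= t0 ->
  forall eps, 0 < eps -> local_mass psi t0 x0 <= Cm * A ^ 2 * t0 + eps.
Proof.
  intros Hs HA Ht0 eps Heps.
  assert (HA0 : 0 <= A) by (pose proof (Cmod_ge_0 (psi 0 0%Z)); pose proof (HA 0%Z); lra).
  set (s := / t0).
  assert (Hs0 : 0 < s) by (apply Rinv_0_lt_compat; lra).
  assert (Hs1 : s <= 1) by (unfold s; rewrite <- Rinv_1; apply Rinv_le_contravar; lra).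
  assert (Hst : s * t0 = 1) by (unfold s; field; lra).
  set (q := exp (- s)).
  assert (Hq0 : 0 < q) by apply exp_pos.
  assert (Hes : exp s * q = 1) by (unfold q; rewrite <- exp_plus; replace (s + - s) with 0 by ring; apply exp_0).
  assert (Hes1 : 1 + s < exp s) by (apply exp_ineq1; lra).
  assert (Hq1 : q < 1) by nra.
  set (c := exp s - 1).
  assert (Hc : c * q = 1 - q) by (unfold c; nra).
  assert (Hc0 : 0 < c) by (unfold c; lra).
  assert (Hcb : c <= s * exp 1).
  { pose proof (exp_ineq1_le (- s)) as H1. fold q in H1.
    assert (exp s <= exp 1).
    { destruct (Req_dec s 1) as [->|Hne]; [lra|]. left; apply exp_increasing; lra. }
    assert (exp s - s * exp s <= 1) by nra.
    unfold c. nra. }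
  set (lam := 2 * c).
  assert (Hlam : 0 < lam) by (unfold lam; lra).
  assert (Hlt : lam * t0 <= 2 * exp 1) by (unfold lam; nra).
  assert (Hq2 : 1 <= (1 - q) * (2 * t0)).
  { assert (q * (1 + s) <= 1) by nra. nra. }
  destruct Hs as [Hder Hsup]. assert (Hs : is_lattice_NLS_solution psi) by (split; auto).
  destruct (Hsup t0) as [M HM].
  set (B := M ^ 2).
  assert (HB0 : 0 <= B) by (unfold B; apply pow2_ge_0).
  assert (HnB : forall t x, Rabs t <= t0 -> nn psi t x <= B).
  { intros t x Ht. specialize (HM t x Ht). unfold nn. rewrite <- Cmod_sq. unfold B.
    pose proof (Cmod_ge_0 (psi t x)). nra. }
  set (N := Int_part t0).
  destruct (base_Int_part t0) as [HN1 HN2]. fold N in HN1, HN2.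
  assert (HN0 : (0 <= N)%Z) by (apply le_IZR; lra).
  set (Nn := Z.to_nat N).
  assert (HNn : INR Nn = IZR N) by (unfold Nn; rewrite INR_IZR_INZ, Z2Nat.id; auto).
  set (del := eps * lam / (4 * (B + 1) * exp 1 * exp (2 * exp 1))).
  assert (Hdel : 0 < del).
  { unfold del. pose proof (exp_pos 1). pose proof (exp_pos (2 * exp 1)).
    apply Rdiv_lt_0_compat; [nra|]. repeat apply Rmult_lt_0_compat; lra. }
  destruct (pow_lt_1_zero q ltac:(rewrite Rabs_pos_eq; lra) del Hdel) as [Kq HKq].
  set (K := S (Nat.max Kq Nn)).
  assert (HqK : q ^ K < del).
  { specialize (HKq K ltac:(unfold K; lia)). rewrite Rabs_pos_eq in HKq; auto. apply pow_le; lra. }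
  assert (HqK0 : 0 < q ^ K) by (apply pow_lt; lra).
  set (E := 4 * q ^ K * B).
  assert (HE : 0 <= E) by (unfold E; nra).
  pose proof (gronwall (WW psi q K x0) (dWW psi q K x0) lam E t0 Hlam ltac:(lra) HE
    (fun t => deriv_WW psi q K x0 t Hs)) as Hg.
  assert (Hg' : WW psi q K x0 t0 <= exp (lam * t0) * (WW psi q K x0 0 + E / lam)).
  { apply Hg. intros t Ht. unfold lam, E.
    apply dWW_bound; try lra. unfold K; lia. intros x; apply HnB; auto. }
  clear Hg.
  assert (HW0 : WW psi q K x0 0 <= 4 * t0 * A ^ 2).
  { unfold WW.
    assert (Hs' : sum_f_R0 (wt q K) (2 * K) <= 4 * t0).
    { pose proof (wt_sum q K) as Hw. rewrite tech3 in Hw by lra.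
      pose proof (pow_lt q (S K) Hq0).
      assert (2 * ((1 - q ^ S K) / (1 - q)) <= 4 * t0 + 1).
      { apply Rle_trans with (2 * (1 / (1 - q))).
        - apply Rmult_le_compat_l; [lra|]. unfold Rdiv. apply Rmult_le_compat_r.
          left; apply Rinv_0_lt_compat; lra. lra.
        - unfold Rdiv. rewrite Rmult_1_l.
          assert (/ (1 - q) <= 2 * t0).
          { rewrite <- (Rmult_1_l (/ (1 - q))). apply Rle_trans with ((1 - q) * (2 * t0) * / (1 - q)).
            apply Rmult_le_compat_r; [left; apply Rinv_0_lt_compat; lra| lra].
            right. field. lra. }
          lra. }
      lra. }
    apply Rle_trans with (sum_f_R0 (fun k => wt q K k * A ^ 2) (2 * K)).
    - apply sum_le. intros k. apply Rmult_le_compat_l. left; apply wt_pos; lra.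
      unfold nn. rewrite <- Cmod_sq. pose proof (HA (xk x0 K k)). pose proof (Cmod_ge_0 (psi 0 (xk x0 K k))). nra.
    - rewrite <- scal_sum. pose proof (pow2_ge_0 A). nra. }
  assert (HLM : local_mass psi t0 x0 <= exp 1 * WW psi q K x0 t0).
  { unfold local_mass. fold N.
    replace (Z.to_nat (2 * N)) with (2 * Nn)%nat
      by (unfold Nn; apply Nat2Z.inj; rewrite Z2Nat.id by lia; rewrite Nat2Z.inj_mul, Z2Nat.id by lia; lia).
    set (d := (K - Nn)%nat).
    set (b := fun j => wt q K j * nn psi t0 (xk x0 K j)).
    assert (Hb : forall j, 0 <= b j).
    { intros j. unfold b. pose proof (wt_pos q K j Hq0). pose proof (nn_nonneg psi t0 (xk x0 K j)). nra. }
    apply Rle_trans with (sum_f_R0 (fun k => exp 1 * b (k + d)%nat) (2 * Nn)).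
    - apply sum_le_bnd. intros k Hk. unfold b.
      replace (x0 - N + Z.of_nat k)%Z with (xk x0 K (k + d)).
      2:{ unfold xk, d, K. rewrite Nat2Z.inj_add, Nat2Z.inj_sub by lia.
          unfold Nn. rewrite Z2Nat.id by lia. lia. }
      rewrite Cmod_sq. fold (nn psi t0 (xk x0 K (k + d))).
      pose proof (nn_nonneg psi t0 (xk x0 K (k + d))).
      assert (Hw : q ^ Nn <= wt q K (k + d)).
      { unfold wt. apply pow_anti; try lra. unfold d, K. lia. }
      assert (Hq3 : 1 <= exp 1 * q ^ Nn).
      { unfold q. rewrite exp_pow_nat, <- exp_plus, HNn.
        pose proof (exp_ineq1_le (1 + - s * IZR N)).
        assert (s * IZR N <= 1) by (rewrite <- Hst; apply Rmult_le_compat_l; lra).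
        lra. }
      pose proof (exp_pos 1).
      assert (H1 : 1 <= exp 1 * wt q K (k + d)).
      { apply Rle_trans with (exp 1 * q ^ Nn); auto. apply Rmult_le_compat_l; lra. }
      set (X := nn psi t0 (xk x0 K (k + d))) in *.
      replace (exp 1 * (wt q K (k + d) * X)) with ((exp 1 * wt q K (k + d)) * X) by ring.
      rewrite <- (Rmult_1_l X) at 1. apply Rmult_le_compat_r; auto.
    - replace (sum_f_R0 (fun k => exp 1 * b (k + d)%nat) (2 * Nn)) with
        (sum_f_R0 (fun k => b (k + d)%nat * exp 1) (2 * Nn)) by (apply sum_eq; intros; ring).
      rewrite <- scal_sum. pose proof (exp_pos 1). apply Rmult_le_compat_l; [lra|].
      eapply Rle_trans. apply sum_shift; auto.
      apply sum_mono; auto. unfold d, K; lia. }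
  assert (Hexp : exp (lam * t0) <= exp (2 * exp 1)).
  { destruct (Req_dec (lam * t0) (2 * exp 1)) as [->|]; [lra|]. left; apply exp_increasing; lra. }
  assert (HEl : exp 1 * exp (2 * exp 1) * (E / lam) <= eps).
  { unfold E. unfold del in HqK.
    pose proof (exp_pos 1). pose proof (exp_pos (2 * exp 1)).
    set (P := exp 1 * exp (2 * exp 1)) in *.
    assert (HP : 0 < P) by (unfold P; nra).
    replace (4 * (B + 1) * exp 1 * exp (2 * exp 1)) with (4 * (B + 1) * P) in HqK by (unfold P; ring).
    assert (q ^ K * (4 * (B + 1) * P) < eps * lam).
    { apply Rmult_lt_compat_r with (r := 4 * (B + 1) * P) in HqK; [|nra].
      replace (eps * lam / (4 * (B + 1) * P) * (4 * (B + 1) * P)) with (eps * lam) in HqK by (field; nra).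
      lra. }
    apply Rmult_le_reg_r with lam; auto.
    replace (P * (4 * q ^ K * B / lam) * lam) with (q ^ K * (4 * B * P)) by (field; lra).
    nra. }
  pose proof (exp_pos 1). pose proof (exp_pos (2 * exp 1)).
  assert (0 <= E / lam) by (apply Rdiv_le_0_compat; lra).
  assert (0 <= WW psi q K x0 0).
  { unfold WW. apply sum_nonneg. intros k. pose proof (wt_pos q K k Hq0). pose proof (nn_nonneg psi 0 (xk x0 K k)). nra. }
  assert (WW psi q K x0 t0 <= exp (2 * exp 1) * (4 * t0 * A ^ 2 + E / lam)).
  { eapply Rle_trans. apply Hg'. apply Rle_trans with (exp (2 * exp 1) * (WW psi q K x0 0 + E / lam)).
    apply Rmult_le_compat_r; lra. apply Rmult_le_compat_l; lra. }
  unfold Cm. nra.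
Qed.

Theorem proposition2 :
  exists C0 : R,
    forall (A : R) (psi : R -> Z -> C),
      is_lattice_NLS_solution psi ->
      (forall x : Z, Cmod (psi 0 x) <= A) ->
      forall (x0 : Z) (t0 : R), 1 <= t0 ->
        Cmod (psi t0 x0) <= C0 * A * sqrt t0
        /\ / t0 * local_mass psi t0 x0 <= C0 * A ^ 2.
Proof.
  exists (Cm + 1). intros A psi Hs HA x0 t0 Ht0.
  pose proof Cm_pos as HC.
  assert (HA0 : 0 <= A) by (pose proof (Cmod_ge_0 (psi 0 0%Z)); pose proof (HA 0%Z); lra).
  assert (HL : local_mass psi t0 x0 <= Cm * A ^ 2 * t0).
  { apply Rle_plus_epsilon. apply main_bound; auto. }
  split.
  - assert (Hterm : Cmod (psi t0 x0) ^ 2 <= local_mass psi t0 x0).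
    { unfold local_mass.
      destruct (base_Int_part t0) as [HN1 HN2].
      assert (HN0 : (0 <= Int_part t0)%Z) by (apply le_IZR; lra).
      set (N := Int_part t0) in *.
      replace x0 with (x0 - N + Z.of_nat (Z.to_nat N))%Z at 1 by (rewrite Z2Nat.id; lia).
      apply (sum_term (fun k => Cmod (psi t0 (x0 - N + Z.of_nat k)%Z) ^ 2)).
      intros; apply pow2_ge_0. lia. }
    pose proof (sqrt_sqrt t0 ltac:(lra)) as Hsq.
    pose proof (sqrt_pos t0).
    pose proof (Cmod_ge_0 (psi t0 x0)).
    assert (Cmod (psi t0 x0) ^ 2 <= ((Cm + 1) * A * sqrt t0) ^ 2).
    { replace (((Cm + 1) * A * sqrt t0) ^ 2) with ((Cm + 1) ^ 2 * A ^ 2 * (sqrt t0 * sqrt t0))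
        by ring. rewrite Hsq.
      pose proof (pow2_ge_0 A). nra. }
    assert (0 <= (Cm + 1) * A * sqrt t0) by (apply Rmult_le_pos; [nra|auto]).
    nra.
  - apply Rmult_le_reg_l with t0; [lra|]. rewrite <- Rmult_assoc, Rinv_r, Rmult_1_l by lra.
    pose proof (pow2_ge_0 A). nra.
Qed.
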